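(* Let $R$ be a pmp equivalence relation on $(X,\mu)$ and $F\subseteq\llbracket R\rrbracket$ a finite subset. Then $s(F)\leq\operatorname{cost}(F)$, where $\operatorname{cost}(F)=\sum_{s\in F}\mu(\operatorname{dom}s)$.
   Context: Let $(X,\mu)$ be a standard probability space and $R$ a pmp countable Borel equivalence relation. $\llbracket R\rrbracket$ denotes the set of partial measure-preserving Borel bijections between Borel subsets of $X$ with graph contained in $R$, modulo null sets, with composition, inverses and identity $1$. Pairwise orthogonal elements (pairwise disjoint domains and ranges) have a sum; $\mathbf\Sigma F$ is the set of finite sums of pairwise orthogonal elements of $F$; $F_\pm=F\cup\{s^{-1}:s\in F\}\cup\{1\}$; $F_\pm^n$ the products of $n$ elements of $F_\pm$. $|s-t|=\mu\{x\in\operatorname{dom}s\cup\operatorname{dom}t:s(x)\neq t(x)\}$ (with $s(x)\neq t(x)$ on $\operatorname{dom}s\triangle\operatorname{dom}t$), $\tau(s)=\mu\{x\in\operatorname{dom}s:s(x)=x\}$. $\llbracket d\rrbracket$: partial permutations of $\{1,\dots,d\}$ with uniform measure, same distance, trace $\operatorname{tr}$. ${\rm SA}(F,n,\delta,d)$ is the set of maps $\varphi:\llbracket R\rrbracket\to\llbracket d\rrbracket$ with $\varphi(1)=1$ such that $|\varphi(st)-\varphi(s)\varphi(t)|<\delta$ for all $s,t\in\mathbf\Sigma F_\pm^n$ with $st\in\mathbf\Sigma F_\pm^n$, and $|\operatorname{tr}(\varphi(s))-\tau(s)|<\delta$ for all $s\in\mathbf\Sigma F_\pm^n$. ${\rm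 NSA}(F,n,\delta,d)$ is the number of distinct restrictions $\varphi|_F$, $\varphi\in{\rm SA}(F,n,\delta,d)$, and $s(F)=\inf_n\inf_{\delta>0}\limsup_{d\to\infty}\frac{1}{d\log d}\log{\rm NSA}(F,n,\delta,d)$ ($\log0=-\infty$). *)

(* Defs.v *)
From HB Require Import structures.
From mathcomp Require Import all_boot all_order all_algebra.
From mathcomp Require Import all_classical all_reals all_analysis.
Set Implicit Arguments. Unset Strict Implicit. Unset Printing Implicit Defensive.
Import Order.TTheory GRing.Theory Num.Theory.
Local Open Scope classical_set_scope.
Local Open Scope ring_scope.

Fixpoint inseq {A : Type} (x : A) (l : seq A) : Prop :=
  if l is b :: l' then x = b \/ inseq x l' else False.

Section Defs.
Context {dX : measure_display} {X : measurableType dX} {R : realType}.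

(* Standard Borel space: Borel-isomorphic to a Borel subset of the real line
   (Kuratowski). *)
Definition standard_borel : Prop :=
  exists (f : X -> R), measurable_fun setT f /\ injective f /\
    measurable (f @` setT) /\ (forall A, measurable A -> measurable (f @` A)).

Definition cber (Rel : X -> X -> Prop) : Prop :=
  [/\ (forall x, Rel x x), (forall x y, Rel x y -> Rel y x),
      (forall x y z, Rel x y -> Rel y z -> Rel x z),
      measurable [set p : X * X | Rel p.1 p.2] &
      (forall x, countable [set y | Rel x y])].

Definition borel_pbij (D : set X) (f g : X -> X) : Prop :=
  [/\ measurable D /\ measurable_fun D f, measurable (f @` D),
      measurable_fun (f @` D) g,
      (forall x, D x -> g (f x) = x) &
      (forall y, (f @` D) y -> f (g y) = y)].

Definition meas_pres (mu : {measure set X -> \bar R}) (D : set X) (f : X -> X) :=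
  forall C, measurable C -> C `<=` D -> mu (f @` C) = mu C.

Definition pmp (mu : {measure set X -> \bar R}) (Rel : X -> X -> Prop) : Prop :=
  forall D f g, borel_pbij D f g -> (forall x, D x -> Rel x (f x)) ->
    meas_pres mu D f.

(* representatives of elements of the full pseudogroup [[R]] *)
Record pfb (mu : {measure set X -> \bar R}) (Rel : X -> X -> Prop) := PFB {
  pdom : set X;
  pfun : X -> X;
  pinv : X -> X;
  pfb_bij : borel_pbij pdom pfun pinv;
  pfb_mp : meas_pres mu pdom pfun;
  pfb_graph : forall x, pdom x -> Rel x (pfun x) }.

Definition rawp := (set X * (X -> X))%type.
Definition rid : rawp := (setT, id).
Definition rcomp (s t : rawp) : rawp :=
  ([set x | t.1 x /\ s.1 (t.2 x)], s.2 \o t.2).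
Definition rran (s : rawp) : set X := s.2 @` s.1.
Definition rsum (l : seq rawp) : rawp :=
  (foldr (fun a A => a.1 `|` A) set0 l,
   foldr (fun a h x => if `[< a.1 x >] then a.2 x else h x) id l).

Variables (mu : {measure set X -> \bar R}) (Rel : X -> X -> Prop).
Local Notation T := (pfb mu Rel).

Definition raw (s : T) : rawp := (pdom s, pfun s).
Definition rinvT (s : T) : rawp := (pfun s @` pdom s, pinv s).

Definition diffset (a b : rawp) : set X :=
  [set x | (a.1 x \/ b.1 x) /\ ~ (a.1 x /\ b.1 x /\ a.2 x = b.2 x)].
Definition rdist (a b : rawp) : R := fine (mu (diffset a b)).
Definition rtau (a : rawp) : R := fine (mu [set x | a.1 x /\ a.2 x = x]).
Definition requiv (a b : rawp) : Prop := mu (diffset a b) = 0%E.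
Definition rorth (a b : rawp) : Prop :=
  mu (a.1 `&` b.1) = 0%E /\ mu (rran a `&` rran b) = 0%E.

Fixpoint orth_all (a : rawp) (l : seq rawp) : Prop :=
  if l is b :: l' then rorth a b /\ orth_all a l' else True.
Fixpoint pairwise_orth (l : seq rawp) : Prop :=
  if l is a :: l' then orth_all a l' /\ pairwise_orth l' else True.

(* the list F has pairwise inequivalent entries, i.e. represents a finite set
   of distinct classes of [[R]] *)
Fixpoint noneq_all (a : rawp) (l : seq rawp) : Prop :=
  if l is b :: l' then ~ requiv a b /\ noneq_all a l' else True.
Fixpoint pairwise_noneq (l : seq rawp) : Prop :=
  if l is a :: l' then noneq_all a l' /\ pairwise_noneq l' else True.

(* F_pm, F_pm^n, Sigma A (as sets of classes, i.e. closed under requiv) *)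
Definition Fpm (F : seq T) (u : T) : Prop :=
  requiv (raw u) rid \/
  exists2 s, inseq s F & (requiv (raw u) (raw s) \/ requiv (raw u) (rinvT s)).
Definition Fpmn (F : seq T) (n : nat) (u : T) : Prop :=
  exists l : seq T, [/\ size l = n, (forall s, inseq s l -> Fpm F s) &
    requiv (raw u) (foldr rcomp rid (map raw l))].
Definition Sigma (A : T -> Prop) (u : T) : Prop :=
  exists l : seq T, [/\ (forall s, inseq s l -> A s),
    pairwise_orth (map raw l) & requiv (raw u) (rsum (map raw l))].

Definition ppinj d (p : {ffun 'I_d -> option 'I_d}) : bool :=
  [forall i, forall j, (p i != None) ==> (p i == p j) ==> (i == j)].
Definition pperm d := {p : {ffun 'I_d -> option 'I_d} | ppinj p}.
Definition ppid d : {ffun 'I_d -> option 'I_d} := [ffun i => Some i].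
Definition ppmul d (p q : {ffun 'I_d -> option 'I_d}) : {ffun 'I_d -> option 'I_d} :=
  [ffun i => obind p (q i)].
Definition ppdist d (p q : {ffun 'I_d -> option 'I_d}) : R :=
  #|[set i | p i != q i]|%:R / d%:R.
Definition pptr d (p : {ffun 'I_d -> option 'I_d}) : R :=
  #|[set i | p i == Some i]|%:R / d%:R.

Definition SA (F : seq T) (n : nat) (delta : R) (d : nat) (phi : T -> pperm d) : Prop :=
  [/\ (forall s t : T, requiv (raw s) (raw t) -> phi s = phi t),
      (forall u : T, requiv (raw u) rid -> val (phi u) = ppid d),
      (forall s t u : T, Sigma (Fpmn F n) s -> Sigma (Fpmn F n) t ->
          Sigma (Fpmn F n) u -> requiv (raw u) (rcomp (raw s) (raw t)) ->
          ppdist (val (phi u)) (ppmul (val (phi s)) (val (phi t))) < delta) &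
      (forall s : T, Sigma (Fpmn F n) s ->
          `|pptr (val (phi s)) - rtau (raw s)| < delta)].

Definition NSA (F : seq T) (n : nat) (delta : R) (d : nat) : nat :=
  #|[set g : (size F).-tuple (pperm d) |
      `[< exists phi : T -> pperm d, SA F n delta phi /\ tval g = map phi F >] ]|.

Definition sa_term (F : seq T) (n : nat) (delta : R) (d : nat) : \bar R :=
  if NSA F n delta d == 0%N then -oo%E
  else (ln (NSA F n delta d)%:R / (d%:R * ln d%:R))%:E.

Definition sofic_s (F : seq T) : \bar R :=
  ereal_inf [set x | exists n delta, 0 < delta /\
     x = limn_esup (sa_term F n delta)].

Definition cost (F : seq T) : R := \sum_(s <- F) fine (mu (pdom s)).

End Defs.

(* Main.v *)
Require Import Defs.
From HB Require Import structures.
From mathcomp Require Import all_boot all_order all_algebra.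
From mathcomp Require Import all_classical all_reals all_analysis.
Set Implicit Arguments. Unset Strict Implicit. Unset Printing Implicit Defensive.
From mathcomp Require Import lra ring.
Import Order.TTheory GRing.Theory Num.Theory.

Definition pdomset d (p : {ffun 'I_d -> option 'I_d}) : {set 'I_d} := [set i | p i != None].

Lemma card_setsT (T : finType) : #|{set T}| = 2 ^ #|T|.
Proof.
by rewrite -cardsT -card_powerset powersetT cardsT.
Qed.

Lemma count_dom_eq d (A : {set 'I_d}) :
  #|[pred p : {ffun 'I_d -> option 'I_d} | pdomset p == A]| <= d ^ #|A|.
Proof.
have -> : (d ^ #|A| = #|[pred o : option 'I_d | o != None]| ^ #|A|)%N.
  by rewrite cardC1 card_option card_ord.
rewrite -(card_pffun_on None); apply: subset_leq_card; apply/fintype.subsetP => p.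
rewrite inE => /eqP <-; apply/pffun_onP; split.
  by apply/fintype.subsetP => i; rewrite !inE.
move=> o /fintype.imageP[i] Hi ->. have : i \in pdomset p by exact: Hi. by rewrite inE.
Qed.

Lemma count_small d m : 0 < d ->
  #|[set p : {ffun 'I_d -> option 'I_d} | #|pdomset p| <= m]| <= 2 ^ d * d ^ m.
Proof.
move=> d0.
rewrite -sum1_card (partition_big (@pdomset d) predT) //=.
apply: leq_trans (_ : \sum_(A : {set 'I_d}) d ^ m <= _); last first.
  by rewrite sum_nat_const card_setsT card_ord.
apply: leq_sum => A _.
rewrite sum1_card.
case: (leqP #|A| m) => hA.
  apply: (@leq_trans (d ^ #|A|)); last by rewrite leq_pexp2l.
  apply: leq_trans (count_dom_eq A).
  apply: subset_leq_card; apply/fintype.subsetP => p; rewrite unfold_in !inE => /andP[_ ->] //.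
apply: (@leq_trans 0) => //; rewrite leqn0; apply/eqP; apply: eq_card0 => p.
rewrite /= unfold_in !inE; apply/negbTE/negP => /andP[h /eqP e].
by move: h; rewrite e leqNgt hA.
Qed.

Lemma dom_idem d (p : {ffun 'I_d -> option 'I_d}) : ppinj p ->
  #|pdomset p| <= #|[set i | p i == Some i]| + #|[set i | p i != ppmul p p i]|.
Proof.
move=> /forallP inj.
apply: leq_trans (leq_card_setU _ _).
apply: subset_leq_card; apply/fintype.subsetP => i; rewrite !inE /ppmul ffunE.
case E: (p i) => [j|] //= _.
case: (eqVneq j i) => [->|ji]; first by rewrite eqxx.
apply/orP; right; apply/negP => /eqP pj.
have := forallP (inj i) j; rewrite E -pj eqxx /= => ij.
by rewrite (eqP ij) eqxx in ji.
Qed.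

Lemma dom_comp d (p e : {ffun 'I_d -> option 'I_d}) :
  #|pdomset p| <= #|pdomset e| + #|[set i | p i != ppmul p e i]|.
Proof.
apply: leq_trans (leq_card_setU _ _).
apply: subset_leq_card; apply/fintype.subsetP => i; rewrite !inE /ppmul ffunE.
by case E: (e i) => [j|] //=.
Qed.
Lemma foldr_prod (T : finType) (f : T -> nat) : foldr muln 1 [seq f x | x : T] = \prod_(x : T) f x.
Proof.
rewrite /image_mem -big_enum /=.
elim: (enum _) => [|a s IH]; rewrite ?big_nil ?big_cons //=. by rewrite IH.
Qed.
Lemma tuple_count (T : finType) k (S : 'I_k -> pred T) :
  #|[set g : k.-tuple T | [forall i, tnth g i \in S i]]| <= \prod_(i < k) #|S i|.
Proof.
rewrite -foldr_prod -(card_family S).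
have inj : injective (fun g : k.-tuple T => [ffun i => tnth g i]).
  move=> g1 g2 /ffunP h; apply: eq_from_tnth => i; have := h i; rewrite !ffunE //.
rewrite -(card_imset _ inj); apply: subset_leq_card; apply/fintype.subsetP => f /imsetP[g].
rewrite inE => /forallP hg ->; apply/familyP => i; rewrite ffunE; exact: hg.
Qed.

Lemma pperm_count d m : 0 < d ->
  #|[pred q : pperm d | #|pdomset (val q)| <= m]| <= 2 ^ d * d ^ m.
Proof.
move=> d0; apply: leq_trans (count_small m d0).
rewrite -(card_imset _ val_inj); apply: subset_leq_card.
apply/fintype.subsetP => f /imsetP[q]; rewrite unfold_in /= => hq ->; by rewrite finset.inE.
Qed.

Lemma card_cl (T : finType) (P : pred T) : #|[set x | P x]%classic| = #|[set x | P x]%SET|.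
Proof. apply: eq_card => x. rewrite finset.inE. apply/idP/idP => h.
  exact: (set_mem h).
  exact: (mem_set h).
Qed.

Lemma dom_real (R : realType) d (p e : {ffun 'I_d -> option 'I_d}) : ppinj e -> (0 < d)%N ->
  ((#|pdomset p|%:R / d%:R : R) <= pptr e + ppdist e (ppmul e e) + ppdist p (ppmul p e))%R.
Proof.
move=> inj d0.
rewrite /pptr /ppdist -!mulrDl ler_pM2r ?invr_gt0 ?ltr0n // -!natrD ler_nat.
rewrite !card_cl.
exact: leq_trans (dom_comp p e) (leq_add (dom_idem inj) (leqnn _)).
Qed.

Lemma limsup_le (R : realType) (u : (\bar R)^nat) (c : \bar R) N :
  (forall n, (N <= n)%N -> (u n <= c)%E) -> (limn_esup u <= c)%E.
Proof.
move=> H.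
rewrite limn_esup_lim (cvg_lim _ (@cvg_esups_inf R u)) //.
apply: le_trans; first by apply: ereal_inf_lbound; exists N.
apply: ge_ereal_sup => _ [n /= Nn <-]; exact: H.
Qed.
Local Open Scope classical_set_scope.
Local Open Scope ring_scope.

Lemma inseq_nth (A : Type) (x0 : A) (F : seq A) i : (i < size F)%N -> inseq (nth x0 F i) F.
Proof.
elim: F i => [|a F IH] [|i] //= h; first by left.
by right; apply: IH.
Qed.

Section Constr.
Context {dX : measure_display} {X : measurableType dX} {R : realType}.
Variables (mu : {measure set X -> \bar R}) (Rel : X -> X -> Prop).
Hypothesis hrefl : forall x, Rel x x.
Hypothesis hsym : forall x y, Rel x y -> Rel y x.

Lemma bij_id (D : set X) : measurable D -> borel_pbij D id id.
Proof.
move=> mD; split => //; rewrite ?image_id //; exact: measurable_id.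
Qed.

Lemma mp_id (D : set X) : meas_pres mu D id.
Proof. by move=> C _ _; rewrite image_id. Qed.

Definition idP (D : set X) (mD : measurable D) : pfb mu Rel :=
  @PFB _ _ _ mu Rel D id id (bij_id mD) (@mp_id D) (fun x _ => hrefl x).

Lemma inv_img (D : set X) f g : borel_pbij D f g -> g @` (f @` D) = D.
Proof.
case=> [[mD mf] mfD mg gf fg].
apply/seteqP; split => x.
  by case=> _ [z Dz <-] <-; rewrite gf.
by move=> Dx; exists (f x); [exists x|rewrite gf].
Qed.

Lemma bij_inv (D : set X) (f g : X -> X) : borel_pbij D f g -> borel_pbij (f @` D) g f.
Proof.
move=> b; have e := inv_img b; case: b => [[mD mf] mfD mg gf fg].
by split => //; rewrite e.
Qed.

Lemma mp_inv (s : pfb mu Rel) : meas_pres mu ((pfun s) @` (pdom s)) (Defs.pinv s).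
Proof.
case: s => D f g b mp gr /= C mC CD.
have b' := b; case: b' => [[mD mf] mfD mg gf fg].
have E : g @` C = D `&` f @^-1` C.
  apply/seteqP; split => x.
    case=> y Cy <-; have [z Dz fz] := CD y Cy.
    by rewrite -fz gf //; split => //=; rewrite fz.
  by case=> Dx Cfx; exists (f x) => //; rewrite gf.
have mgC : measurable (g @` C) by rewrite E; exact: mf.
have gCD : g @` C `<=` D by rewrite E => x [].
rewrite -(mp _ mgC gCD); congr (mu _).
apply/seteqP; split => y.
  by case=> _ [z Cz <-] <-; rewrite fg //; exact: CD.
move=> Cy; exists (g y); first by exists y.
by rewrite fg //; exact: CD.
Qed.

Lemma graph_inv (s : pfb mu Rel) : forall y, ((pfun s) @` (pdom s)) y -> Rel y (Defs.pinv s y).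
Proof.
case: s => D f g b mp gr /= y [x Dx <-].
have b' := b; case: b' => [[mD mf] mfD mg gf fg].
by rewrite gf //; apply: hsym; exact: gr.
Qed.

Definition invP (s : pfb mu Rel) : pfb mu Rel :=
  @PFB _ _ _ mu Rel _ _ _ (bij_inv (pfb_bij s)) (@mp_inv s) (@graph_inv s).


Lemma req_ext (a b : set X * (X -> X)) : (forall x, a.1 x <-> b.1 x) ->
  (forall x, a.1 x -> a.2 x = b.2 x) -> requiv mu a b.
Proof.
move=> h1 h2; rewrite /requiv.
suff -> : diffset a b = set0 by rewrite measure0.
apply/seteqP; split; last by [].
move=> x; rewrite /diffset /= => -[[ax|bx] nh]; apply: nh.
  by split => //; split; [apply/h1|apply: h2].
have ax : a.1 x by apply/h1.
by split => //; split => //; apply: h2.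
Qed.

Lemma pdom_meas (s : pfb mu Rel) : measurable (pdom s).
Proof. by case: (pfb_bij s) => [[]]. Qed.

Definition esP (s : pfb mu Rel) := idP (pdom_meas s).
Definition idT := idP (@measurableT _ X).

Lemma req_refl (s : pfb mu Rel) : requiv mu (raw s) (raw s).
Proof. by apply: req_ext. Qed.

Lemma req_idT : requiv mu (raw idT) rid.
Proof. by apply: req_ext. Qed.

Lemma req_inv (s : pfb mu Rel) : requiv mu (raw (invP s)) (rinvT s).
Proof. by apply: req_ext. Qed.

Lemma req_s2 (s : pfb mu Rel) :
  requiv mu (raw s) (foldr rcomp rid (map (@raw _ _ _ mu Rel) [:: s; idT])).
Proof. by apply: req_ext => x /=; rewrite /rcomp /=; split => // -[[]]. Qed.

Lemma req_e2 (s : pfb mu Rel) :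
  requiv mu (raw (esP s)) (foldr rcomp rid (map (@raw _ _ _ mu Rel) [:: invP s; s])).
Proof.
case: (pfb_bij s) => [[mD mf] mfD mg gf fg].
apply: req_ext => x /=; rewrite /rcomp /=.
  by split => [Dx|[[_ Dx] _]] //; split => //; exists x.
by move=> Dx; rewrite gf.
Qed.

Lemma req_sum1 (u : pfb mu Rel) : requiv mu (raw u) (rsum [:: raw u]).
Proof.
apply: req_ext => x /=; first by split => [h|[h|[]]]; [left|].
by move=> h; rewrite asboolT.
Qed.

Lemma req_se (s : pfb mu Rel) : requiv mu (raw s) (rcomp (raw s) (raw (esP s))).
Proof. by apply: req_ext => x /=; split => // -[]. Qed.

Lemma req_ee (s : pfb mu Rel) :
  requiv mu (raw (esP s)) (rcomp (raw (esP s)) (raw (esP s))).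
Proof. by apply: req_ext => x /=; split => // -[]. Qed.


Lemma Fpm_s F (s : pfb mu Rel) : inseq s F -> Fpm F s.
Proof. by move=> h; right; exists s => //; left; exact: req_refl. Qed.

Lemma Fpm_inv F (s : pfb mu Rel) : inseq s F -> Fpm F (invP s).
Proof. by move=> h; right; exists s => //; right; exact: req_inv. Qed.

Lemma Fpm_id F : Fpm F idT.
Proof. by left; exact: req_idT. Qed.

Lemma Fpmn_s F (s : pfb mu Rel) : inseq s F -> Fpmn F 2 s.
Proof.
move=> h; exists [:: s; idT]; split => //; last exact: req_s2.
move=> t /= [->|[->|[]]]; [exact: Fpm_s|exact: Fpm_id].
Qed.

Lemma Fpmn_e F (s : pfb mu Rel) : inseq s F -> Fpmn F 2 (esP s).
Proof.
move=> h; exists [:: invP s; s]; split => //; last exact: req_e2.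
move=> t /= [->|[->|[]]]; [exact: Fpm_inv|exact: Fpm_s].
Qed.

Lemma Sig_of (A : pfb mu Rel -> Prop) u : A u -> Sigma A u.
Proof.
move=> h; exists [:: u]; split => //; last exact: req_sum1.
by move=> t /= [->|[]].
Qed.

Lemma rtau_e (s : pfb mu Rel) : rtau mu (raw (esP s)) = fine (mu (pdom s)).
Proof.
rewrite /rtau /=; congr (fine (mu _)).
by apply/seteqP; split => x //= [].
Qed.

Lemma dom_bound F (delta : R) d (phi : pfb mu Rel -> pperm d) (s : pfb mu Rel) :
  SA F 2 delta phi -> inseq s F -> (0 < d)%N ->
  (#|pdomset (val (phi s))|%:R < (fine (mu (pdom s)) + 3 * delta) * d%:R).
Proof.
move=> [_ _ hmul htr] hs d0.
have Se := Sig_of (Fpmn_e hs); have Ss := Sig_of (Fpmn_s hs).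
have h1 := hmul _ _ _ Se Se Se (req_ee s).
have h2 := hmul _ _ _ Ss Se Ss (req_se s).
have h3 := htr _ Se; rewrite rtau_e ltr_distl in h3.
case/andP: h3 => _ h3.
have inje : ppinj (val (phi (esP s))) by exact: (valP (phi (esP s))).
have hn := dom_real R (val (phi s)) inje d0.
have dd : (0 : R) < d%:R by rewrite ltr0n.
rewrite -ltr_pdivrMr //.
apply: (le_lt_trans hn). lra.
Qed.

Lemma NSA_bound F (delta : R) d (x0 : pfb mu Rel) : (0 < d)%N -> 0 < delta ->
  (NSA F 2 delta d <= \prod_(i < size F)
     (2 ^ d * d ^ Num.trunc ((fine (mu (pdom (nth x0 F i))) + 3 * delta) * d%:R)))%N.
Proof.
move=> d0 dl0; rewrite /NSA.
set M := fun i : 'I_(size F) => Num.trunc ((fine (mu (pdom (nth x0 F i))) + 3 * delta) * d%:R).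
set S := fun i => [pred q : pperm d | (#|pdomset (val q)| <= M i)%N].
apply: (@leq_trans #|[set g : (size F).-tuple (pperm d) |
   [forall i, tnth g i \in S i]]%SET|).
  apply: subset_leq_card; apply/fintype.subsetP => g /set_mem/asboolP [phi [hSA hg]].
  rewrite finset.inE; apply/forallP => i; rewrite /S unfold_in /=.
  have -> : tnth g i = phi (nth x0 F i) by rewrite (tnth_nth (phi x0)) hg (nth_map x0).
  rewrite /M truncn_ge_nat; last first.
    apply: mulr_ge0 => //; apply: addr_ge0; first exact: fine_ge0.
    by rewrite mulr_ge0 // ltW.
  apply: ltW; apply: (@dom_bound F) => //; exact: inseq_nth.
apply: leq_trans (tuple_count _) _; apply: leq_prod => i _; exact: pperm_count.
Qed.

End Constr.



Unset Implicit Arguments.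

Theorem mainTheorem11 (dX : measure_display) (X : measurableType dX)
  (R : realType) (mu : probability X R) (Rel : X -> X -> Prop)
  (hstd : @standard_borel dX X R) (hR : cber Rel) (hpmp : pmp mu Rel)
  (F : seq (pfb mu Rel))
  (hF : pairwise_noneq mu (map (@raw _ _ _ mu Rel) F)) :
  (sofic_s F <= (cost F)%:E)%E.
Proof.
have [hrefl hsym _ _ _] := hR.
set x0 : pfb mu Rel := idT mu hrefl.
apply/lee_addgt0Pr => eps eps0.
set k := size F.
pose delta := eps / (6 * (k%:R + 1)).
have k0 : (0 : R) <= k%:R by [].
have dl0 : 0 < delta by rewrite /delta divr_gt0 // mulr_gt0 // ltr_wpDl.
have h3 : 3 * k%:R * delta <= eps / 2.
  rewrite /delta mulrA ler_pdivrMr ?mulr_gt0 ?ltr_wpDl //.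
  have -> : eps / 2 * (6 * (k%:R + 1)) = 3 * eps * (k%:R + 1) by field.
  nra.
pose K := 2 * k%:R * ln 2 / eps.
pose N := (Num.trunc (expR K) + 2)%N.
apply: le_trans; first by apply: ereal_inf_lbound; exists 2%N, delta; split.
apply: (@limsup_le R _ _ N) => d hd.
rewrite /sa_term; case: ifP => [_|NZ]; first by rewrite leNye.
rewrite lee_fin.
have d2 : (2 <= d)%N by apply: leq_trans hd; rewrite leq_addl.
have d0 : (0 < d)%N by apply: leq_trans d2.
have dd : (1 : R) < d%:R by rewrite ltr1n.
have lnd0 : 0 < ln (d%:R : R) by apply: ln_gt0.
have dK : expR K <= d%:R.
  have := truncnS_gt (expR K); move/ltW/le_trans; apply.
  rewrite ler_nat; apply: leq_trans hd; by rewrite /N addnS ltnS leq_addr.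
have lnK' : K <= ln (d%:R : R).
  by rewrite -[X in X <= _]expRK ler_ln // ?posrE ?expR_gt0 // (lt_trans _ dd).
have hA : k%:R * ln 2 <= eps / 2 * ln (d%:R : R).
  move: lnK'; rewrite /K ler_pdivrMr //; nra.
have hN := NSA_bound hrefl hsym F x0 d0 dl0.
set M := fun i : 'I_k => Num.trunc ((fine (mu (pdom (nth x0 F i))) + 3 * delta) * d%:R).
have hN' : (NSA F 2 delta d <= 2 ^ (d * k) * d ^ (\sum_(i < k) M i))%N.
  apply: leq_trans hN _.
  by rewrite big_split /= prod_nat_const card_ord -expnM expn_sum.
have NZ' : (0 < NSA F 2 delta d)%N by rewrite lt0n NZ.
have hM : ((\sum_(i < k) M i)%:R : R) <= (cost F + 3 * k%:R * delta) * d%:R.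
  rewrite natr_sum /cost (big_nth x0) big_mkord -/k.
  apply: (@le_trans _ _ (\sum_(i < k) (fine (mu (pdom (nth x0 F i))) + 3 * delta) * d%:R)).
    apply: ler_sum => i _; rewrite /M.
    have hx : (0 : R) <= (fine (mu (pdom (nth x0 F i))) + 3 * delta) * d%:R.
      apply: mulr_ge0 => //; apply: addr_ge0; first exact: fine_ge0.
      by rewrite mulr_ge0 // ltW.
    by case/andP: (truncn_itv hx).
  rewrite -mulr_suml big_split /= sumr_const card_ord -mulr_natr.
  apply: ler_wpM2r => //; lra.
have hln : ln ((NSA F 2 delta d)%:R : R) <=
    (d * k)%:R * ln (2 : R) + (\sum_(i < k) M i)%:R * ln (d%:R : R).
  have := hN'; rewrite -(ler_nat R) natrM !natrX => le1.
  have p2 : (0 : R) < 2%:R ^+ (d * k) by rewrite exprn_gt0 // ltr0n.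
  have pd : (0 : R) < d%:R ^+ (\sum_(i < k) M i) by rewrite exprn_gt0 // ltr0n.
  have le2 : ln ((NSA F 2 delta d)%:R : R) <= ln (2%:R ^+ (d * k) * d%:R ^+ (\sum_(i < k) M i)).
    by rewrite ler_ln // posrE ?ltr0n // mulr_gt0.
  apply: (le_trans le2).
  have l2 : (0:R) < 2 by rewrite ltr0n. have ld : (0:R) < d%:R by rewrite ltr0n.
  rewrite lnM ?posrE //.
  have e1 : ln ((2:R) ^+ (d*k)%N) = ln 2 *+ (d*k)%N := lnXn _ l2.
  have e2 : ln ((d%:R:R) ^+ (\sum_(i < k) M i)) = ln d%:R *+ (\sum_(i < k) M i) := lnXn _ ld.
  by rewrite e1 e2 !mulr_natl.
rewrite ler_pdivrMr ?mulr_gt0 ?ltr0n //.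
apply: (le_trans hln).
rewrite natrM.
move: hM hA h3 lnd0 dd.
move: (d%:R : R) ((\sum_(i < k) M i)%:R : R) (cost F) (k%:R : R) (ln (2 : R)) (ln (d%:R : R)).
move=> D S c kk a L hM hA h3 lnd0 dd.
have f1 : S * L <= (c + 3 * kk * delta) * D * L by rewrite ler_wpM2r // ltW.
have D0 : 0 <= D by apply: le_trans (ltW dd); lra.
have f2 : D * (kk * a) <= D * (eps / 2 * L) by rewrite ler_wpM2l.
have DL : 0 <= D * L by rewrite mulr_ge0 // ltW.
have f3 : 3 * kk * delta * (D * L) <= eps / 2 * (D * L) by rewrite ler_wpM2r.
nra.
Qed.
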